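(* Let $m\ge1$. The set $\mathbb{T}[[t_1,\ldots,t_m]]$, equipped with the operations $S\oplus T=\operatorname{Vert}(S\cup T)$ and $S\odot T=\operatorname{Vert}(S+T)$ (Minkowski sum), is a commutative idempotent semiring with zero element $\emptyset$ and unit element $\{(0,\ldots,0)\}$.
   Context: For $X\subseteq \mathbb{Z}_{\geq0}^m$, the Newton polygon $\mathcal{N}(X)\subseteq\mathbb{R}_{\geq0}^m$ is the convex hull (in $\mathbb{R}^m$) of $X+\mathbb{Z}_{\geq0}^m$. An element $x\in X$ is a vertex of $X$ if $x\notin\mathcal{N}(X\setminus\{x\})$, and $\operatorname{Vert}(X)$ denotes the set of vertices of $X$. The map $\operatorname{Vert}$ on the power set $\mathcal{P}(\mathbb{Z}_{\ge0}^m)$ satisfies $\operatorname{Vert}\circ\operatorname{Vert}=\operatorname{Vert}$, and $\mathbb{T}[[t_1,\ldots,t_m]]$ denotes its image $\{\operatorname{Vert}(X): X\subseteq\mathbb{Z}_{\ge0}^m\}$ (the set of vertex sets). A commutative semiring is a tuple $(S,+,\times,0,1)$ with $(S,+,0)$, $(S,\times,1)$ commutative monoids, $\times$ distributing over $+$, and $0\times a=0$; it is idempotent if $a+a=a$ for all $a$. *)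

(* Defs.v *)
From HB Require Import structures.
From mathcomp Require Import all_boot all_order all_algebra.
Set Implicit Arguments. Unset Strict Implicit. Unset Printing Implicit Defensive.
Import Order.TTheory GRing.Theory Num.Theory.
Local Open Scope ring_scope.

Definition pt (m : nat) := 'I_m -> nat.
Definition pset (m : nat) := pt m -> Prop.

Definition ptR (R : realFieldType) m (x : pt m) : 'I_m -> R :=
  fun i => (x i)%:R.

Definition upset m (X : pset m) : pset m :=
  fun y => exists x, X x /\ forall i, (x i <= y i)%N.

Definition minkowski m (S T : pset m) : pset m :=
  fun z => exists x y, S x /\ T y /\ forall i, z i = (x i + y i)%N.

Definition newton (R : realFieldType) m (X : pset m) : ('I_m -> R) -> Prop :=
  fun v => exists (n : nat) (p : 'I_n -> pt m) (l : 'I_n -> R),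
    (forall k, upset X (p k)) /\ (forall k, 0 <= l k) /\
    \sum_(k < n) l k = 1 /\
    forall i, v i = \sum_(k < n) l k * ((p k i)%:R).

Arguments newton R {m} X v.

Definition vertex (R : realFieldType) m (X : pset m) (x : pt m) : Prop :=
  X x /\ ~ newton R (fun y => X y /\ y <> x) (ptR R x).

Arguments vertex R {m} X x.

Definition Vert (R : realFieldType) m (X : pset m) : pset m := vertex R X.

Arguments Vert R {m} X _.

(* membership in T[[t_1,...,t_m]] = image of Vert *)
Definition inTT (R : realFieldType) m (S : pset m) : Prop :=
  exists X : pset m, S = Vert R X.

Definition oplus (R : realFieldType) m (S T : pset m) : pset m :=
  Vert R (fun x => S x \/ T x).
Definition odot (R : realFieldType) m (S T : pset m) : pset m :=
  Vert R (minkowski S T).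
Definition tzero m : pset m := fun _ => False.
Definition tone m : pset m := fun x => forall i, x i = 0%N.

Definition comm_idem_semiring (A : Type) (C : A -> Prop)
  (add mul : A -> A -> A) (zero one : A) : Prop :=
  C zero /\ C one /\
      (forall a b, C a -> C b -> C (add a b)) /\
      (forall a b, C a -> C b -> C (mul a b)) /\
      (forall a b c, C a -> C b -> C c -> add a (add b c) = add (add a b) c) /\
      (forall a b, C a -> C b -> add a b = add b a) /\
      (forall a, C a -> add zero a = a) /\
      (forall a b c, C a -> C b -> C c -> mul a (mul b c) = mul (mul a b) c) /\
      (forall a b, C a -> C b -> mul a b = mul b a) /\
      (forall a, C a -> mul one a = a) /\
      (forall a b c, C a -> C b -> C c -> mul a (add b c) = add (mul a b) (mul a c)) /\
      (forall a, C a -> mul zero a = zero) /\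
      (forall a, C a -> add a a = a).

(* Main.v *)
Require Import Defs.
From HB Require Import structures.
From mathcomp Require Import all_boot all_order all_algebra.
From mathcomp Require Import ring lra.
From Stdlib Require Import ClassicalEpsilon FunctionalExtensionality PropExtensionality Classical.
Set Implicit Arguments. Unset Strict Implicit. Unset Printing Implicit Defensive.
Import Order.TTheory GRing.Theory Num.Theory.
Local Open Scope ring_scope.

Definition allp {A : Type} (P : A -> Prop) (s : seq A) := forall y, List.In y s -> P y.

Lemma In_cat A (y : A) s1 s2 : List.In y (s1 ++ s2) <-> List.In y s1 \/ List.In y s2.
Proof. elim: s1 => [|a s IH] /=; [tauto|]. rewrite IH; tauto. Qed.

Lemma In_map A B (f : A -> B) y s : List.In y (map f s) -> exists x, List.In x s /\ y = f x.
Proof.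
elim: s => [|a s IH] //= [<-|/IH [x [H1 H2]]]; [by exists a; auto | by exists x; auto].
Qed.

Lemma allp_cat A (P : A -> Prop) s1 s2 : allp P s1 -> allp P s2 -> allp P (s1 ++ s2).
Proof. by move=> H1 H2 y /In_cat [/H1|/H2]. Qed.

Lemma allp_cons A (P : A -> Prop) a s : allp P (a :: s) <-> P a /\ allp P s.
Proof.
split=> [H|[Ha Hs] y /= [<-|/Hs]] //; split; first by apply: H; left.
by move=> y Hy; apply: H; right.
Qed.

Definition wsum {R : realFieldType} {m} (s : seq (R * pt m)) : R := \sum_(q <- s) q.1.
Definition cv {R : realFieldType} {m} (s : seq (R * pt m)) (i : 'I_m) : R :=
  \sum_(q <- s) q.1 * (q.2 i)%:R.
Definition goodc {R : realFieldType} {m} (X : pset m) (s : seq (R * pt m)) :=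
  allp (fun q => 0 <= q.1 /\ X q.2) s.
Definition Dw {R : realFieldType} {m} (X : pset m) (w : R) (v : 'I_m -> R) :=
  exists s, goodc X s /\ wsum s = w /\ forall i, cv s i <= v i.
Definition sc {R : realFieldType} {m} (c : R) (q : R * pt m) := (c * q.1, q.2).
Definition minus {m} (X : pset m) (x : pt m) : pset m := fun y => X y /\ y <> x.

Lemma wsum_cat {R : realFieldType} {m} (s1 s2 : seq (R * pt m)) :
  wsum (s1 ++ s2) = wsum s1 + wsum s2.
Proof. by rewrite /wsum big_cat. Qed.
Lemma cv_cat {R : realFieldType} {m} (s1 s2 : seq (R * pt m)) i :
  cv (s1 ++ s2) i = cv s1 i + cv s2 i.
Proof. by rewrite /cv big_cat. Qed.
Lemma wsum_cons {R : realFieldType} {m} (q : R * pt m) s : wsum (q :: s) = q.1 + wsum s.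
Proof. by rewrite /wsum big_cons. Qed.
Lemma cv_cons {R : realFieldType} {m} (q : R * pt m) s i :
  cv (q :: s) i = q.1 * (q.2 i)%:R + cv s i.
Proof. by rewrite /cv big_cons. Qed.
Lemma wsum_sc {R : realFieldType} {m} c (s : seq (R * pt m)) :
  wsum (map (sc c) s) = c * wsum s.
Proof. by rewrite /wsum big_map mulr_sumr. Qed.
Lemma cv_sc {R : realFieldType} {m} c (s : seq (R * pt m)) i :
  cv (map (sc c) s) i = c * cv s i.
Proof. by rewrite /cv big_map mulr_sumr; apply: eq_bigr => q _; rewrite /= mulrA. Qed.

Lemma goodc_cat {R : realFieldType} {m} X (s1 s2 : seq (R * pt m)) :
  goodc X s1 -> goodc X s2 -> goodc X (s1 ++ s2).
Proof. exact: allp_cat. Qed.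
Lemma goodc_sc {R : realFieldType} {m} X c (s : seq (R * pt m)) :
  0 <= c -> goodc X s -> goodc X (map (sc c) s).
Proof.
move=> c0 H y Hy; case: (In_map Hy) => q [/H [H1 H2] ->]; split => //=; exact: mulr_ge0.
Qed.
Lemma goodc_mono {R : realFieldType} {m} (X Y : pset m) (s : seq (R * pt m)) :
  (forall y, X y -> Y y) -> goodc X s -> goodc Y s.
Proof. by move=> XY H q /H [? /XY]. Qed.

Lemma wsum_ge0 {R : realFieldType} {m} X (s : seq (R * pt m)) : goodc X s -> 0 <= wsum s.
Proof.
elim: s => [|q s IH] H; first by rewrite /wsum big_nil.
move/allp_cons: H => [[H1 _] H2]; rewrite wsum_cons; apply: addr_ge0 => //; exact: IH.
Qed.
Lemma cv_ge0 {R : realFieldType} {m} X (s : seq (R * pt m)) i : goodc X s -> 0 <= cv s i.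
Proof.
elim: s => [|q s IH] H; first by rewrite /cv big_nil.
move/allp_cons: H => [[H1 _] H2]; rewrite cv_cons; apply: addr_ge0; last exact: IH.
by apply: mulr_ge0.
Qed.

Lemma Dw_cat {R : realFieldType} {m} (X : pset m) (w1 w2 : R) v1 v2 :
  Dw X w1 v1 -> Dw X w2 v2 -> Dw X (w1 + w2) (fun i => v1 i + v2 i).
Proof.
move=> [s1 [g1 [e1 l1]]] [s2 [g2 [e2 l2]]]; exists (s1 ++ s2); split; first exact: goodc_cat.
by rewrite wsum_cat e1 e2; split => // i; rewrite cv_cat; apply: lerD.
Qed.
Lemma Dw_sc {R : realFieldType} {m} (X : pset m) (c w : R) v :
  0 <= c -> Dw X w v -> Dw X (c * w) (fun i => c * v i).
Proof.
move=> c0 [s [g [e l]]]; exists (map (sc c) s); split; first exact: goodc_sc.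
by rewrite wsum_sc e; split => // i; rewrite cv_sc; apply: ler_wpM2l.
Qed.
Lemma Dw_le {R : realFieldType} {m} (X : pset m) (w : R) v v' :
  Dw X w v -> (forall i, v i <= v' i) -> Dw X w v'.
Proof.
move=> [s [g [e l]]] H; exists s; do 2!split => //; move=> i; exact: le_trans (l i) (H i).
Qed.
Lemma Dw_mono {R : realFieldType} {m} (X Y : pset m) (w : R) v :
  (forall y, X y -> Y y) -> Dw X w v -> Dw Y w v.
Proof. by move=> XY [s [g [e l]]]; exists s; split => //; exact: goodc_mono g. Qed.
Lemma Dw_pt {R : realFieldType} {m} (X : pset m) x : X x -> Dw X (1 : R) (ptR R x).
Proof.
move=> Xx; exists [:: (1, x)]; split; first by move=> q /= [<-|//]; split.
rewrite wsum_cons /wsum big_nil addr0; split => // i.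
by rewrite cv_cons /cv big_nil addr0 mul1r.
Qed.

Lemma CCw {R : realFieldType} {m} (X Y : pset m) (s : seq (R * pt m)) :
  (forall u, X u -> Dw Y 1 (ptR R u)) -> goodc X s -> Dw Y (wsum s) (cv s).
Proof.
move=> H; elim: s => [|q s IH] G.
  exists [::]; split; first by move=> ? [].
  by split => // i.
move/allp_cons: G => [[q0 Xq] G].
have := Dw_cat (Dw_sc q0 (H _ Xq)) (IH G); rewrite mulr1 => D.
rewrite wsum_cons; case: D => t [gt [et lt]]; exists t; do 2!split => //.
by move=> i; rewrite cv_cons; exact: lt i.
Qed.

Lemma CC {R : realFieldType} {m} (X Y : pset m) (v : 'I_m -> R) :
  (forall u, X u -> Dw Y 1 (ptR R u)) -> Dw X 1 v -> Dw Y 1 v.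
Proof.
move=> H [s [g [e l]]]; have := CCw H g; rewrite e => D; exact: Dw_le D l.
Qed.
Lemma ler_sum_allp {R : realFieldType} {A} (P : A -> Prop) (s : seq A) (F G : A -> R) :
  allp P s -> (forall q, P q -> F q <= G q) -> \sum_(q <- s) F q <= \sum_(q <- s) G q.
Proof.
move=> H FG; elim: s H => [|q s IH] H; first by rewrite !big_nil.
move/allp_cons: H => [Hq Hs]; rewrite !big_cons; apply: lerD; [exact: FG | exact: IH].
Qed.

Lemma In_nth {A} (x0 : A) s k : (k < size s)%N -> List.In (nth x0 s k) s.
Proof.
elim: s k => [|a s IH] [|k] //= Hk; [by left | right; exact: IH].
Qed.

Lemma upset_trans {m} (X : pset m) p q : upset X p -> (forall i, (p i <= q i)%N) -> upset X q.
Proof. move=> [x [Xx Hx]] H; exists x; split => // i; exact: leq_trans (Hx i) (H i). Qed.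

Lemma upset_refl {m} (X : pset m) p : X p -> upset X p.
Proof. by move=> Xp; exists p; split. Qed.

Lemma newton_D {R : realFieldType} {m} (X : pset m) v : newton R X v -> Dw X 1 v.
Proof.
move=> [n [p [l [Hup [Hl [Hs Hv]]]]]].
pose f k := proj1_sig (constructive_indefinite_description _ (Hup k)).
have Hf k : X (f k) /\ forall i, (f k i <= p k i)%N :=
  proj2_sig (constructive_indefinite_description _ (Hup k)).
exists [seq (l k, f k) | k <- index_enum 'I_n]; split.
  move=> q Hq; case: (In_map Hq) => k [_ ->]; split => //=; exact: (Hf k).1.
split; first by rewrite /wsum big_map /=.
move=> i; rewrite Hv /cv big_map /=; apply: ler_sum => k _.
by apply: ler_wpM2l => //; rewrite ler_nat; exact: (Hf k).2.
Qed.

Definition bump {m} (j : 'I_m) (c : nat) (p : pt m) : pt m :=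
  fun i => if i == j then maxn (p i) c else p i.

Lemma round_step {R : realFieldType} {m} (X : pset m) (x : pt m) (j : 'I_m)
  (s : seq (R * pt m)) :
  goodc (upset X) s -> wsum s = 1 -> (forall i, cv s i <= (x i)%:R) ->
  exists t, goodc (upset X) t /\ wsum t = 1 /\ (forall i, cv t i <= (x i)%:R) /\
    cv t j = (x j)%:R /\ forall i, i != j -> cv t i = cv s i.
Proof.
move=> gs ws ls.
pose s' := [seq (q.1, bump j (x j) q.2) | q <- s].
have gs' : goodc (upset X) s'.
  move=> q Hq; case: (In_map Hq) => q0 [/gs [H1 H2] ->]; split => //=.
  apply: (upset_trans H2) => i; rewrite /bump; case: (i == j) => //; exact: leq_maxl.
have ws' : wsum s' = 1 by rewrite -ws /wsum big_map.
have es' i : i != j -> cv s' i = cv s i.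
  by move=> /negbTE ij; rewrite /cv big_map /= /bump ij.
have ls' : (x j)%:R <= cv s' j.
  have -> : (x j)%:R = wsum s * (x j)%:R :> R by rewrite ws mul1r.
  rewrite /wsum mulr_suml /cv big_map /=.
  apply: (ler_sum_allp (F := fun q => q.1 * (x j)%:R)
     (G := fun q => q.1 * (bump j (x j) q.2 j)%:R) gs) => q [q0 _] /=.
  by apply: ler_wpM2l => //; rewrite /bump eqxx ler_nat leq_maxr.
set c := cv s j; set c' := cv s' j; set xj := (x j)%:R.
have cx : c <= xj := ls j.
pose th := if c' == c then 0 else (xj - c) / (c' - c).
have th0 : 0 <= th.
  rewrite /th; case: eqP => // _; apply: divr_ge0; rewrite subr_ge0 //.
  exact: le_trans cx ls'.
have th1 : th <= 1.
  rewrite /th; case: eqP => [_|/eqP ne]; first exact: ler01.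
  have pos : 0 < c' - c by rewrite subr_gt0 lt_neqAle eq_sym ne (le_trans cx ls').
  by rewrite ler_pdivrMr // mul1r lerD2r.
have thj : (1 - th) * c + th * c' = xj.
  rewrite /th; case: eqP => [e|/eqP ne].
    rewrite subr0 mul1r mul0r addr0; apply/eqP; rewrite eq_le cx /=.
    by rewrite -e.
  have pos : c' - c != 0 by rewrite subr_eq0.
  by field; rewrite pos.
exists (map (sc (1 - th)) s ++ map (sc th) s'); split.
  by apply: goodc_cat; apply: goodc_sc => //; rewrite subr_ge0.
split; first by rewrite wsum_cat !wsum_sc ws ws' !mulr1 subrK.
have ei i : i != j -> cv (map (sc (1 - th)) s ++ map (sc th) s') i = cv s i.
  by move=> ij; rewrite cv_cat !cv_sc es' // -mulrDl subrK mul1r.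
have ej : cv (map (sc (1 - th)) s ++ map (sc th) s') j = xj.
  by rewrite cv_cat !cv_sc.
split.
  move=> i; case: (eqVneq i j) => [->|ij]; first by rewrite ej.
  by rewrite ei.
by split.
Qed.
Lemma round_aux {R : realFieldType} {m} (X : pset m) (x : pt m) n :
  Dw X (1 : R) (ptR R x) ->
  exists s : seq (R * pt m), goodc (upset X) s /\ wsum s = 1 /\
    (forall i, cv s i <= (x i)%:R) /\ forall i : 'I_m, (i < n)%N -> cv s i = (x i)%:R.
Proof.
move=> D; elim: n => [|n [s [gs [ws [ls es]]]]].
  case: D => s [gs [ws ls]]; exists s; split; first exact: (goodc_mono (@upset_refl m X) gs).
  by split => //; split.
case: (ltnP n m) => nm.
  have [t [gt [wt [lt [et ot]]]]] := round_step (Ordinal nm) gs ws ls.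
  exists t; split => //; split => //; split => //.
  move=> i; rewrite ltnS leq_eqVlt => /orP [/eqP e|ii].
    have -> : i = Ordinal nm by apply: val_inj.
    exact: et.
  rewrite ot ?es //; apply/negP => /eqP e; by move: ii; rewrite e /= ltnn.
exists s; split => //; split => //; split => // i _; apply: es; exact: leq_trans (ltn_ord i) nm.
Qed.

Lemma D_newton {R : realFieldType} {m} (X : pset m) (x : pt m) :
  Dw X (1 : R) (ptR R x) -> newton R X (ptR R x).
Proof.
move=> D; have [s [gs [ws [_ es]]]] := round_aux m D.
exists (size s), (fun k => (nth (0, x) s k).2), (fun k => (nth (0, x) s k).1).
split; first by move=> k; exact: (gs _ (In_nth _ (ltn_ord k))).2.
split; first by move=> k; exact: (gs _ (In_nth _ (ltn_ord k))).1.
split; first by rewrite -ws /wsum (big_nth (0, x)) big_mkord.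
move=> i; rewrite /ptR -es // /cv (big_nth (0, x)) big_mkord //.
Qed.

Lemma vertexE {R : realFieldType} {m} (X : pset m) x :
  vertex R X x <-> X x /\ ~ Dw (minus X x) (1 : R) (ptR R x).
Proof.
split=> [[Xx N]|[Xx N]]; split => // D.
  by apply: N; exact: D_newton.
by apply: N; exact: newton_D.
Qed.
Definition leS {m} (n : nat) (y x : pt m) := forall i : 'I_m, (i < n)%N -> (y i <= x i)%N.

Lemma max_In {m} (j : 'I_m) (F : seq (pt m)) y :
  List.In y F -> (y j <= \max_(z <- F) z j)%N.
Proof.
elim: F => [|a F IH] //= [<-|H]; rewrite big_cons; first exact: leq_maxl.
exact: leq_trans (IH H) (leq_maxr _ _).
Qed.

Lemma leS_S {m} n (j : 'I_m) y x :
  nat_of_ord j = n -> leS n y x -> (y j <= x j)%N -> leS n.+1 y x.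
Proof.
move=> jn H hj i; rewrite ltnS leq_eqVlt => /orP [/eqP e|]; last exact: H.
by have -> : i = j by apply: val_inj; rewrite /= e jn.
Qed.

Lemma dickson_aux {m} n : forall (P : pt m -> Prop), exists F : seq (pt m), allp P F /\
  forall x, P x -> exists y, List.In y F /\ leS n y x.
Proof.
elim: n => [|n IH] P.
  case: (classic (exists x, P x)) => [[x Px]|nP].
    exists [:: x]; split; first by move=> y [<-|].
    by move=> z _; exists x; split; [left|].
  exists [::]; split; first by move=> y [].
  by move=> x Px; case: nP; exists x.
case: (ltnP n m) => nm; last first.
  have [F [HF H]] := IH P; exists F; split => // x Px; have [y [Hy Hl]] := H x Px.
  exists y; split => // i _; apply: Hl; exact: leq_trans (ltn_ord i) nm.
pose j := Ordinal nm.
have [F0 [HF0 H0]] := IH P.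
have aux : forall B, exists F1 : seq (pt m), allp P F1 /\
    forall x, P x -> (x j < B)%N -> exists y, List.In y F1 /\ leS n.+1 y x.
  elim=> [|B [F1 [HF1 H1]]].
    by exists [::]; split; first by move=> y [].
  have [FB [HFB HB]] := IH (fun x => P x /\ x j = B).
  exists (F1 ++ FB); split.
    by apply: allp_cat => // y /HFB [].
  move=> x Px; rewrite ltnS leq_eqVlt => /orP [/eqP e|xl].
    have [y [Hy Hl]] := HB x (conj Px e).
    exists y; split; first by apply/In_cat; right.
    apply: (leS_S (j := j) (erefl _) Hl); have [_ ->] := HFB y Hy; by rewrite e.
  have [y [Hy Hl]] := H1 x Px xl; exists y; split => //; by apply/In_cat; left.
have [F1 [HF1 H1]] := aux (\max_(z <- F0) z j).
exists (F0 ++ F1); split; first exact: allp_cat.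
move=> x Px; case: (ltnP (x j) (\max_(z <- F0) z j)) => xl.
  have [y [Hy Hl]] := H1 x Px xl; exists y; split => //; by apply/In_cat; right.
have [y [Hy Hl]] := H0 x Px; exists y; split; first by apply/In_cat; left.
apply: (leS_S (j := j) (erefl _) Hl); exact: leq_trans (max_In j Hy) xl.
Qed.

Lemma dickson {m} (P : pt m -> Prop) : exists F : seq (pt m), allp P F /\
  forall x, P x -> exists y, List.In y F /\ forall i, (y i <= x i)%N.
Proof.
have [F [HF H]] := dickson_aux m P; exists F; split => // x /H [y [Hy Hl]].
by exists y; split => // i; apply: Hl.
Qed.
Definition eqpt {m} (x y : pt m) := [forall i, x i == y i].
Lemma eqptE {m} (x y : pt m) : eqpt x y -> x = y.
Proof. by move=> /forallP H; apply: functional_extensionality => i; apply/eqP. Qed.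

Lemma In_filter {A} (P : pred A) y s : List.In y (filter P s) -> List.In y s /\ P y.
Proof.
elim: s => [|a s IH] //=; case: ifP => Pa /=.
  by move=> [<-|/IH [? ?]]; [split; [left|] | split; [right|]].
by move=> /IH [? ?]; split; [right|].
Qed.

Definition sig {m} (x : pt m) : nat := \sum_i x i.
Definition sigR {R : realFieldType} {m} (v : 'I_m -> R) : R := \sum_i v i.

Lemma sig_ge {m} (x : pt m) i : (x i <= sig x)%N.
Proof. by rewrite /sig (bigD1 i) //= leq_addr. Qed.

Lemma sig_gt {m} (x y : pt m) : (forall i, (x i <= y i)%N) -> y <> x -> (sig x < sig y)%N.
Proof.
move=> H ne; have [i ni] : exists i, y i <> x i.
  apply: NNPP => N; apply: ne; apply: functional_extensionality => i.
  by apply: NNPP => E; apply: N; exists i.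
rewrite /sig (bigD1 i) //= [X in (_ < X)%N](bigD1 i) //=.
rewrite -addSn; apply: leq_add; last by apply: leq_sum => k _.
by rewrite ltn_neqAle H andbT; apply/eqP => e; apply: ni.
Qed.

Lemma sigR_cv {R : realFieldType} {m} (s : seq (R * pt m)) :
  sigR (cv s) = \sum_(q <- s) q.1 * (sig q.2)%:R.
Proof.
rewrite /sigR /cv exchange_big /=; apply: eq_bigr => q _.
by rewrite /sig natr_sum mulr_sumr.
Qed.

Lemma mix_one {R : realFieldType} {m} (G : pset m) (g u : pt m) :
  u <> g -> Dw G (1 : R) (ptR R u) ->
  exists (b : R) r, 0 <= b /\ goodc (minus G g) r /\ wsum r = b /\
   (forall i, (1 - b) * (g i)%:R + cv r i <= (u i)%:R) /\
   ((sig g).+1)%:R <= (sig u)%:R + (((sig g).+1 * sig g)%N)%:R * b.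
Proof.
move=> ug D.
case: (boolP [forall i, g i <= u i]%N) => [/forallP H|/forallPn [i0 Hi0]].
  exists 0, [::]; split => //; split; first by move=> ? [].
  split; first by rewrite /wsum big_nil.
  split; first by move=> i; rewrite /cv big_nil subr0 mul1r addr0 ler_nat H.
  by rewrite mulr0 addr0 ler_nat; apply: sig_gt.
case: D => t [gt [wt lt]].
pose r := filter (fun q => ~~ eqpt q.2 g) t.
have wr : wsum t = \sum_(q <- t | eqpt q.2 g) q.1 + wsum r.
  by rewrite /wsum big_filter [LHS](bigID (fun q => eqpt q.2 g)).
have cr i : cv t i = (\sum_(q <- t | eqpt q.2 g) q.1) * (g i)%:R + cv r i.
  rewrite /cv big_filter (bigID (fun q => eqpt q.2 g)) /= mulr_suml; congr (_ + _).
  by apply: eq_bigr => q /eqptE ->.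
have gr : goodc (minus G g) r.
  move=> q Hq; case: (In_filter Hq) => /gt [q0 Gq] ne; split => //; split => // e.
  by move: ne; rewrite e; move/negP; apply; apply/forallP => i.
have b0 := wsum_ge0 gr.
have ea : \sum_(q <- t | eqpt q.2 g) q.1 = 1 - wsum r by rewrite -wt wr addrK.
exists (wsum r), r; split => //; split => //; split => //.
have li i : (1 - wsum r) * (g i)%:R + cv r i <= (u i)%:R by rewrite -ea -cr; exact: lt i.
split => //.
have := li i0; have := cv_ge0 i0 gr; rewrite -ltnNge in Hi0.
have := sig_ge g i0; have : (0 : R) <= (sig u)%:R by [].
have : (0 : R) <= (sig g)%:R by [].
rewrite -(ler_nat R) -natr1 in Hi0; rewrite -(ler_nat R).
rewrite natrM -!natr1 /ptR.
move: (wsum r) b0 => b b0; move: ((g i0)%:R : R) ((u i0)%:R : R) ((sig g)%:R : R) ((sig u)%:R : R) Hi0 => gi ui S Su Hi.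
move=> S0 Su0 gS c0 lin.

have h1 : 1 <= b * gi by nra.
have h2 : 1 <= b * S by nra.
have h3 : 0 <= (S + 1) * (b * S - 1) by apply: mulr_ge0; lra.
nra.
Qed.
Lemma mix_agg {R : realFieldType} {m} (W G : pset m) (g : pt m) (s : seq (R * pt m)) :
  (forall u, W u -> u <> g -> Dw G (1 : R) (ptR R u)) -> goodc (minus W g) s ->
  exists (b : R) r, 0 <= b /\ goodc (minus G g) r /\ wsum r = b /\
   (forall i, (wsum s - b) * (g i)%:R + cv r i <= cv s i) /\
   ((sig g).+1)%:R * wsum s <= sigR (cv s) + (((sig g).+1 * sig g)%N)%:R * b.
Proof.
move=> H; elim: s => [|q s IH] gs.
  exists 0, [::]; split => //; split; first by move=> ? [].
  split; first by rewrite /wsum big_nil.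
  split; first by move=> i; rewrite /cv /wsum !big_nil subr0 mul0r addr0.
  by rewrite sigR_cv /wsum !big_nil mulr0 mulr0 addr0.
move/allp_cons: gs => [[q0 [Wq ne]] gs].
have [b [r [b0 [gr [wr [lr sr]]]]]] := IH gs.
have [bu [ru [bu0 [gru [wru [lru sru]]]]]] := mix_one ne (H _ Wq ne).
exists (q.1 * bu + b), (map (sc q.1) ru ++ r).
split; first by apply: addr_ge0 => //; apply: mulr_ge0.
split; first by apply: goodc_cat => //; apply: goodc_sc.
split; first by rewrite wsum_cat wsum_sc wru wr.
split.
  move=> i; rewrite cv_cat cv_sc cv_cons wsum_cons.
  have := lr i; have := ler_wpM2l q0 (lru i).
  move: (cv s i) (cv r i) (cv ru i) ((g i)%:R : R) ((q.2 i)%:R : R) => a1 a2 a3 a4 a5.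
  move=> h1 h2; nra.
rewrite sigR_cv big_cons -sigR_cv wsum_cons.
have := ler_wpM2l q0 sru; move: sr.
move: (sigR (cv s)) (wsum s) ((sig q.2)%:R : R) (((sig g).+1)%:R : R) (((sig g).+1 * sig g)%N%:R : R) => a1 a2 a3 a4 a5.
move=> h1 h2; nra.
Qed.

Lemma Mix {R : realFieldType} {m} (W G : pset m) (g : pt m) :
  (forall u, W u -> u <> g -> Dw G (1 : R) (ptR R u)) ->
  ~ Dw (minus G g) (1 : R) (ptR R g) -> ~ Dw (minus W g) (1 : R) (ptR R g).
Proof.
move=> H N [s [gs [ws ls]]].
have [b [r [b0 [gr [wr [lr sr]]]]]] := mix_agg H gs.
rewrite ws in lr sr.
have sS : sigR (cv s) <= (sig g)%:R.
  rewrite /sig natr_sum /sigR; apply: ler_sum => i _; exact: ls i.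
have bp : 0 < b.
  rewrite lt_neqAle b0 andbT; apply/eqP => e; move: sr; rewrite -e mulr0 addr0 mulr1.
  move=> h; have := le_trans h sS; by rewrite ler_nat ltnn.
apply: N; exists (map (sc b^-1) r); split; first by apply: goodc_sc => //; rewrite invr_ge0 ltW.
split; first by rewrite wsum_sc wr mulVf // gt_eqF.
move=> i; rewrite cv_sc /ptR mulrC ler_pdivrMr //.
have := lr i; have := ls i; rewrite /ptR.
move: (cv s i) (cv r i) ((g i)%:R : R) => a1 a2 a3 h1 h2; nra.
Qed.
Lemma size_filter_lt {A} (p : pred A) f (F : seq A) :
  List.In f F -> ~~ p f -> (size (filter p F) < size F)%N.
Proof.
elim: F => [|a F IH] //= [<-|H] nf.
  by rewrite (negbTE nf) ltnS size_filter count_size.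
case: ifP => _ /=; first by rewrite ltnS IH.
by apply: leq_trans (IH H nf) _.
Qed.

Lemma In_filter2 {A} (p : pred A) y s : List.In y s -> p y -> List.In y (filter p s).
Proof.
elim: s => [|a s IH] //= [<-|H] py; first by rewrite py; left.
by case: ifP => _ //=; [right|]; apply: IH.
Qed.

Lemma eqpt_refl {m} (x : pt m) : eqpt x x.
Proof. by apply/forallP => i. Qed.

Lemma reduce {R : realFieldType} {m} (P : pt m -> Prop) n : forall F : seq (pt m),
  (size F <= n)%N -> allp P F ->
  exists G : seq (pt m), allp P G /\
    (forall f, List.In f F -> Dw (fun y => List.In y G) (1:R) (ptR R f)) /\
    (forall g, List.In g G -> ~ Dw (minus (fun y => List.In y G) g) (1:R) (ptR R g)).
Proof.
elim: n => [|n IH] F sF PF.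
  case: F sF PF => // _ _; exists [::]; split; first by move=> ? [].
  by split => ? [].
case: (classic (exists f, List.In f F /\ Dw (minus (fun y => List.In y F) f) (1:R) (ptR R f)))
  => [[f [Hf Df]]|nE].
  pose F' := filter (fun y => ~~ eqpt y f) F.
  have sF' : (size F' <= n)%N.
    rewrite -ltnS; apply: leq_trans sF; apply: (size_filter_lt Hf).
    by rewrite negbK eqpt_refl.
  have PF' : allp P F' by move=> y Hy; case: (In_filter Hy) => /PF.
  have [G [PG [FG NG]]] := IH F' sF' PF'.
  have F'G : forall y, List.In y F -> y <> f -> Dw (fun y => List.In y G) (1:R) (ptR R y).
    move=> y Hy ne; apply: FG; apply: In_filter2 => //; apply/negP => /eqptE.
    exact: ne.
  exists G; split => //; split => // f' Hf'.
  case: (classic (f' = f)) => [->|ne]; last exact: F'G.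
  by apply: (CC (X := minus (fun y => List.In y F) f)) => // u [Hu ne]; apply: F'G.
exists F; split => //; split; first by move=> f Hf; apply: Dw_pt.
by move=> g Hg Dg; apply: nE; exists g.
Qed.

Lemma K {R : realFieldType} {m} (W : pset m) v : Dw W (1:R) v -> Dw (Vert R W) 1 v.
Proof.
move=> D.
have [F [HF HD]] := dickson W.
have [G [HG [FG Gv]]] := reduce (R := R) (leqnn (size F)) HF.
have WG : forall u, W u -> Dw (fun y => List.In y G) (1:R) (ptR R u).
  move=> u Wu; have [f [Hf le]] := HD u Wu; apply: Dw_le (FG f Hf) _ => i.
  by rewrite /ptR ler_nat.
have GV : forall g, List.In g G -> Vert R W g.
  move=> g Hg; apply/vertexE; split; first exact: HG.
  apply: (Mix (G := fun y => List.In y G)) => [u Wu _|]; [exact: WG | exact: Gv].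
apply: (CC (X := W)) D => u Wu; apply: Dw_mono (WG u Wu) => y; exact: GV.
Qed.

Lemma L {R : realFieldType} {m} (Y Z : pset m) :
  (forall x, Vert R Y x -> Z x) -> (forall x, Z x -> Y x) -> Vert R Z = Vert R Y.
Proof.
move=> VZ ZY; apply: functional_extensionality => x; apply: propositional_extensionality.
split => [/vertexE [Zx N]|Vx].
  apply/vertexE; split; first exact: ZY.
  move=> D; apply: N.
  apply: Dw_mono (K D) => y /vertexE [[Yy yx] Ny].
  split => //; apply: VZ; apply/vertexE; split => //.
  apply: (Mix (G := minus Y x)) => // u Yu uy.
  case: (classic (u = x)) => [->|ux]; first exact: D.
  by apply: Dw_pt.
have Zx := VZ x Vx; move/vertexE: Vx => [Yx N].
apply/vertexE; split => // D; apply: N; apply: Dw_mono D => y [Zy yx]; split => //.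
exact: ZY.
Qed.
Lemma pext {m} (A B : pset m) : (forall x, A x <-> B x) -> A = B.
Proof.
move=> H; apply: functional_extensionality => x; apply: propositional_extensionality; exact: H.
Qed.

Lemma VV {R : realFieldType} {m} (X : pset m) : Vert R (Vert R X) = Vert R X.
Proof. by apply: L => // x [Xx _]. Qed.

Lemma inTT_fix {R : realFieldType} {m} (a : pset m) : inTT R a -> Vert R a = a.
Proof. by move=> [X ->]; rewrite VV. Qed.

Lemma U1 {R : realFieldType} {m} (A Y : pset m) :
  Vert R (fun x => A x \/ Vert R Y x) = Vert R (fun x => A x \/ Y x).
Proof.
apply: L => [x /vertexE [[Ax|Yx] N]|x [Ax|[Yx _]]]; [by left | right | by left | by right].
apply/vertexE; split => // D; apply: N; apply: Dw_mono D => y [Yy yx]; split => //; by right.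
Qed.

Lemma U1' {R : realFieldType} {m} (A Y : pset m) :
  Vert R (fun x => Vert R Y x \/ A x) = Vert R (fun x => Y x \/ A x).
Proof.
have E (B C : pset m) : (fun x => B x \/ C x) = (fun x => C x \/ B x) by apply: pext => x; tauto.
by rewrite E U1 E.
Qed.

Lemma U2 {R : realFieldType} {m} (A Y : pset m) :
  Vert R (minkowski A (Vert R Y)) = Vert R (minkowski A Y).
Proof.
apply: L => [z /vertexE [[a [y [Aa [Yy ez]]]] N]|z [a [y [Aa [[Yy _] ez]]]]]; last first.
  by exists a, y.
exists a, y; split => //; split => //; apply/vertexE; split => // [[s [gs [ws ls]]]].
apply: N; exists [seq (q.1, fun i => a i + q.2 i) | q <- s]; split.
  move=> q Hq; case: (In_map Hq) => q' [/gs [q0 [Yq ne]] ->]; split => //=; split.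
    by exists a, q'.2.
  move=> e; apply: ne; apply: functional_extensionality => i.
  by apply/eqP; rewrite -(eqn_add2l (a i)) -ez -e.
split; first by rewrite -ws /wsum big_map.
move=> i; rewrite /cv big_map /= /ptR ez natrD.
have -> : \sum_(q <- s) q.1 * (a i + q.2 i)%:R = (a i)%:R * wsum s + cv s i.
  by rewrite /wsum /cv mulr_sumr -big_split /=; apply: eq_bigr => q _; rewrite natrD mulrDr mulrC.
by rewrite ws mulr1 lerD2l; exact: ls i.
Qed.

Lemma mink_comm {m} (A B : pset m) : minkowski A B = minkowski B A.
Proof.
by apply: pext => z; split => [[x [y [Ax [By e]]]]|[x [y [Ax [By e]]]]]; exists y, x;
  do 2!split => //; move=> i; rewrite e addnC.
Qed.

Lemma U2' {R : realFieldType} {m} (A Y : pset m) :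
  Vert R (minkowski (Vert R Y) A) = Vert R (minkowski Y A).
Proof. by rewrite mink_comm U2 mink_comm. Qed.

Lemma mink_assoc {m} (A B C : pset m) :
  minkowski A (minkowski B C) = minkowski (minkowski A B) C.
Proof.
apply: pext => z; split.
  move=> [x [w [Ax [[y [u [By [Cu ew]]]] ez]]]].
  exists (fun i => x i + y i), u; split; first by exists x, y.
  by split => // i; rewrite ez ew addnA.
move=> [w [u [[x [y [Ax [By ew]]]] [Cu ez]]]].
exists x, (fun i => y i + u i); split => //; split; first by exists y, u.
by move=> i; rewrite ez ew addnA.
Qed.

Lemma mink_distr {m} (A B C : pset m) :
  minkowski A (fun x => B x \/ C x) = (fun x => minkowski A B x \/ minkowski A C x).
Proof.
apply: pext => z; split.
  by move=> [x [y [Ax [[By|Cy] e]]]]; [left|right]; exists x, y.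
by move=> [[x [y [Ax [By e]]]]|[x [y [Ax [Cy e]]]]]; exists x, y; do 2!split => //; [left|right].
Qed.

Lemma Dw_empty {R : realFieldType} {m} (X : pset m) v : (forall y, ~ X y) -> ~ Dw X (1:R) v.
Proof.
move=> H [[|q s] [gs [ws _]]]; first by move: ws; rewrite /wsum big_nil => /eqP; rewrite eq_sym oner_eq0.
by have [_ /H] := gs q (or_introl erefl).
Qed.

Lemma Vert_zero {R : realFieldType} (m : nat) : Vert R (@tzero m) = @tzero m.
Proof. by apply: pext => x; split => [[]|]. Qed.

Lemma Vert_one {R : realFieldType} (m : nat) : Vert R (@tone m) = @tone m.
Proof.
apply: pext => x; split => [[]//|Tx]; apply/vertexE; split => //.
apply: Dw_empty => y [Ty yx]; apply: yx; apply: functional_extensionality => i.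
by rewrite Tx Ty.
Qed.

Lemma mink_one {m} (A : pset m) : minkowski (@tone m) A = A.
Proof.
apply: pext => z; split => [[x [y [Tx [Ay e]]]]|Az].
  have -> : z = y by apply: functional_extensionality => i; rewrite e Tx.
  done.
by exists (fun _ => 0%N), z.
Qed.

Lemma mink_zero {m} (A : pset m) : minkowski (@tzero m) A = @tzero m.
Proof. by apply: pext => z; split => [[x [y [[]]]]|[]]. Qed.

Theorem mainTheorem5 (R : realFieldType) (m : nat) (hm : (1 <= m)%N) :
  comm_idem_semiring (@inTT R m) (@oplus R m) (@odot R m) (@tzero m) (@tone m).
Proof.
rewrite /comm_idem_semiring /oplus /odot.
have Eu (B C : pset m) : (fun x => B x \/ C x) = (fun x => C x \/ B x) by apply: pext => x; tauto.
split; first by exists (@tzero m); rewrite Vert_zero.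
split; first by exists (@tone m); rewrite Vert_one.
split; first by move=> a b _ _; eexists.
split; first by move=> a b _ _; eexists.
split.
  move=> a b c _ _ _; rewrite U1 U1'; congr (Vert R _); apply: pext => x; tauto.
split; first by move=> a b _ _; rewrite Eu.
split.
  move=> a Ha; rewrite -[RHS](inTT_fix Ha); congr (Vert R _); apply: pext => x.
  by split => [[[]|]|]; [| right].
split; first by move=> a b c _ _ _; rewrite U2 U2' mink_assoc.
split; first by move=> a b _ _; rewrite mink_comm.
split; first by move=> a Ha; rewrite mink_one inTT_fix.
split; first by move=> a b c _ _ _; rewrite U2 U1' U1 mink_distr.
split; first by move=> a _; rewrite mink_zero Vert_zero.
move=> a Ha; rewrite -[RHS](inTT_fix Ha); congr (Vert R _); apply: pext => x; tauto.
Qed.
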